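(* Let $R$ be a ring and $K\subseteq R$ a subring (containing $1$) which is a (not necessarily commutative) field, and suppose that the projective line $\mathbb{P}(R)$ is disconnected. Then the generalized chain geometry $\Sigma(K,R)$ admits an automorphism which is not induced by any semilinear bijection of $R^2$.
   Context: $R$ is an associative ring with unit element $1$; $\mathrm{GL}_2(R)$ is the group of invertible $2\times2$ matrices over $R$. A pair $(a,b)\in R^2$ is admissible if it is the first row of some matrix in $\mathrm{GL}_2(R)$. The projective line $\mathbb{P}(R)$ is the set of all cyclic submodules $R(a,b)$ of the left $R$-module $R^2$ with $(a,b)$ admissible; $\mathrm{GL}_2(R)$ acts on it by $R(a,b)\mapsto R((a,b)G)$. Two points $R(a,b)$, $R(c,d)$ are distant iff $\begin{pmatrix}a&b\\c&d\end{pmatrix}\in\mathrm{GL}_2(R)$; $\mathbb{P}(R)$ is disconnected if the graph on $\mathbb{P}(R)$ whose edges are the pairs of distant points has more than one connected component. For a subfield $K$ of $R$, the standard $K$-chain is $\{R(k,l):(k,l)\in K^2\setminus\{(0,0)\}\}\subseteq\mathbb{P}(R)$, and the $K$-chains are its images under $\mathrm{GL}_2(R)$; $\Sigma(K,R)$ is the incidence structure (point set $\mathbb{P}(R)$, blocks the $K$-chains), and an automorphism of it is a bijection of $\mathbb{P}(R)$ which maps the set of $K$-chains onto itself. A semilinear bijection of $R^2$ is a bijective additive map $f:R^2\to R^2$ for which there is a ring automorphism $\zeta$ of $R$ with $f(rv)=r^\zeta f(v)$ for all $r\in R$, $v\in R^2$; a bijection $\gamma$ of $\mathbb{P}(R)$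 is induced by $f$ if $p^\gamma=f(p)$ for all $p\in\mathbb{P}(R)$. *)

(* Defs.v *)
From HB Require Import structures.
From mathcomp Require Import all_boot all_order all_algebra.
From Stdlib Require Import Relations.
Set Implicit Arguments. Unset Strict Implicit. Unset Printing Implicit Defensive.
Import GRing.Theory.
Local Open Scope ring_scope.

(* R : an associative ring with 1 (pzRingType: 1 = 0 is not excluded). *)
(* Elements of R^2 are row vectors 'rV[R]_2; R acts on the left by *: .  *)

Definition GL2 (R : pzRingType) (G : 'M[R]_2) : Prop :=
  exists H : 'M[R]_2, G *m H = 1%:M /\ H *m G = 1%:M.

Definition admissible (R : pzRingType) (v : 'rV[R]_2) : Prop :=
  exists G : 'M[R]_2, GL2 G /\ row 0 G = v.

Definition cyc (R : pzRingType) (v : 'rV[R]_2) : 'rV[R]_2 -> Prop :=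
  fun w => exists r : R, w = r *: v.

Definition isPoint (R : pzRingType) (S : 'rV[R]_2 -> Prop) : Prop :=
  exists v, admissible v /\ S = cyc v.

Definition point (R : pzRingType) := {S : 'rV[R]_2 -> Prop | isPoint S}.

Definition imgS (R : pzRingType) (f : 'rV[R]_2 -> 'rV[R]_2)
  (S : 'rV[R]_2 -> Prop) : 'rV[R]_2 -> Prop :=
  fun w => exists u, S u /\ w = f u.

Definition distant (R : pzRingType) (p q : point R) : Prop :=
  exists v w : 'rV[R]_2, proj1_sig p = cyc v /\ proj1_sig q = cyc w /\
    GL2 (col_mx v w).

Definition disconnected (R : pzRingType) : Prop :=
  exists p q : point R, ~ clos_refl_trans (point R) (@distant R) p q.

Definition subfield (R : pzRingType) (K : R -> Prop) : Prop :=
  K 1 /\ (1 : R) <> 0 /\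
  (forall x y, K x -> K y -> K (x - y) /\ K (x * y)) /\
  (forall x, K x -> x <> 0 -> exists y, K y /\ x * y = 1 /\ y * x = 1).

Definition std_chain (R : pzRingType) (K : R -> Prop) (p : point R) : Prop :=
  exists v : 'rV[R]_2, K (v 0 0) /\ K (v 0 1) /\ v <> 0 /\ proj1_sig p = cyc v.

Definition is_chain (R : pzRingType) (K : R -> Prop) (C : point R -> Prop) : Prop :=
  exists G : 'M[R]_2, GL2 G /\
    forall p : point R, C p <->
      exists q : point R, std_chain K q /\
        proj1_sig p = imgS (fun u => u *m G) (proj1_sig q).

Definition img_pt (R : pzRingType) (g : point R -> point R) (C : point R -> Prop)
  : point R -> Prop := fun p => exists q, C q /\ p = g q.

Definition chain_aut (R : pzRingType) (K : R -> Prop) (g : point R -> point R) : Prop :=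
  bijective g /\
  (forall C, is_chain K C -> is_chain K (img_pt g C)) /\
  (forall D, is_chain K D ->
     exists C, is_chain K C /\ forall p, D p <-> img_pt g C p).

Definition semilinear_bij (R : pzRingType) (f : 'rV[R]_2 -> 'rV[R]_2) : Prop :=
  bijective f /\ (forall u v, f (u + v) = f u + f v) /\
  exists zeta : {rmorphism R -> R}, bijective zeta /\
    forall (r : R) (v : 'rV[R]_2), f (r *: v) = zeta r *: f v.

Definition induced_by (R : pzRingType) (f : 'rV[R]_2 -> 'rV[R]_2)
  (g : point R -> point R) : Prop :=
  forall p : point R, proj1_sig (g p) = imgS f (proj1_sig p).

(* Main.v *)
Require Import Defs.
From mathcomp Require Import all_boot all_order all_algebra.
From Stdlib Require Import Relations ClassicalEpsilon FunctionalExtensionality PropExtensionality ProofIrrelevance.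
Set Implicit Arguments. Unset Strict Implicit. Unset Printing Implicit Defensive.
Import GRing.Theory.
Local Open Scope ring_scope.



Section S. Variable R : pzRingType.
Implicit Types (A B M N G : 'M[R]_2) (u v w : 'rV[R]_2) (p q r x y : point R).
Lemma ord2 (i : 'I_2) : i = 0 \/ i = 1.
Proof. case: i => [[|[|n]]] Hi; [left|right|by []]; exact/val_inj. Qed.
Lemma mulmx2E (A B : 'M[R]_2) i j : (A *m B) i j = A i 0 * B 0 j + A i 1 * B 1 j.
Proof. rewrite mxE !big_ord_recl big_ord0 addr0; congr (_ * _ + _ * _); congr (_ _ _); exact/val_inj. Qed.
Lemma mx2_eq (A B : 'M[R]_2) : A 0 0 = B 0 0 -> A 0 1 = B 0 1 -> A 1 0 = B 1 0 -> A 1 1 = B 1 1 -> A = B.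
Proof. move=> h1 h2 h3 h4; apply/matrixP=> i j.
by case: (ord2 i) => ->; case: (ord2 j) => ->. Qed.
Lemma rv2_eq (A B : 'rV[R]_2) : A 0 0 = B 0 0 -> A 0 1 = B 0 1 -> A = B.
Proof. move=> h1 h2; apply/matrixP=> i j.
by rewrite (ord1 i); case: (ord2 j) => ->. Qed.
Lemma mulrv2E (A : 'rV[R]_2) (B : 'M[R]_2) j : (A *m B) 0 j = A 0 0 * B 0 j + A 0 1 * B 1 j.
Proof. rewrite mxE !big_ord_recl big_ord0 addr0; congr (_ * _ + _ * _); congr (_ _ _); exact/val_inj. Qed.
Lemma colmx0 (u w : 'rV[R]_2) j : (col_mx u w : 'M_2) 0 j = u 0 j.
Proof. by rewrite mxE; case: splitP => // k _; rewrite (ord1 k). Qed.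
Lemma colmx1 (u w : 'rV[R]_2) j : (col_mx u w : 'M_2) 1 j = w 0 j.
Proof. rewrite mxE; case: splitP => // k; rewrite (ord1 k) //. Qed.
Definition rv (a b : R) : 'rV[R]_2 := \row_(j < 2) (if (j : nat) == 0%N then a else b).
Lemma rv0 a b : rv a b 0 0 = a. Proof. by rewrite mxE. Qed.
Lemma rv1 a b : rv a b 0 1 = b. Proof. by rewrite mxE. Qed.
Lemma id00 : (1%:M : 'M[R]_2) 0 0 = 1. Proof. by rewrite mxE. Qed.
Lemma id01 : (1%:M : 'M[R]_2) 0 1 = 0. Proof. by rewrite mxE. Qed.
Lemma id10 : (1%:M : 'M[R]_2) 1 0 = 0. Proof. by rewrite mxE. Qed.
Lemma id11 : (1%:M : 'M[R]_2) 1 1 = 1. Proof. by rewrite mxE. Qed.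
Definition Sw : 'M[R]_2 := col_mx (rv 0 1) (rv 1 0).
Lemma SwSw : Sw *m Sw = 1%:M.
Proof. by apply: mx2_eq; rewrite mulmx2E !colmx0 !colmx1 !rv0 !rv1 ?id00 ?id01 ?id10 ?id11 !(mulr0,mul0r,mulr1,mul1r,addr0,add0r). Qed.


End S.
Ltac mxsimp := rewrite ?mulmx2E ?mulrv2E ?colmx0 ?colmx1 ?rv0 ?rv1 ?id00 ?id01 ?id10 ?id11
  ?(mulr0,mul0r,mulr1,mul1r,addr0,add0r).

Section S2. Variable R : pzRingType.
Local Notation Sw := (Sw R).
Implicit Types (A B M N G : 'M[R]_2) (u v w : 'rV[R]_2) (p q r x y : point R).
Lemma set_ext (S T : 'rV[R]_2 -> Prop) : (forall w, S w <-> T w) -> S = T.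
Proof. move=> h; apply: functional_extensionality => w; apply: propositional_extensionality; exact: h. Qed.
Lemma pt_ext (p q : point R) : proj1_sig p = proj1_sig q -> p = q.
Proof. case: p => S hS; case: q => T hT /= E; subst T; f_equal; exact: proof_irrelevance. Qed.

Lemma GL2_mul A B : GL2 A -> GL2 B -> GL2 (A *m B).
Proof.
move=> [A' [h1 h2]] [B' [h3 h4]]; exists (B' *m A'); split.
  by rewrite mulmxA -(mulmxA A) h3 mulmx1 h1.
by rewrite mulmxA -(mulmxA B') h2 mulmx1 h4.
Qed.
Lemma GL2_Sw : GL2 (Sw). Proof. by exists Sw; rewrite SwSw. Qed.

Lemma adm_mul v G : GL2 G -> admissible v -> admissible (v *m G).
Proof. move=> hG [M [hM <-]]; exists (M *m G); split; [exact: GL2_mul|by rewrite row_mul]. Qed.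

Lemma imgS_cyc v G : imgS (fun u => u *m G) (cyc v) = cyc (v *m G).
Proof.
apply: set_ext => w; split.
  by move=> [u [[r ->] ->]]; exists r; rewrite scalemxAl.
by move=> [r ->]; exists (r *: v); split; [exists r|rewrite scalemxAl].
Qed.

Lemma act_isPoint G (HG : GL2 G) (p : point R) : isPoint (imgS (fun u => u *m G) (proj1_sig p)).
Proof. case: p => S [v [hv E]] /=; rewrite E; exists (v *m G); split; [exact: adm_mul|exact: imgS_cyc]. Qed.

Definition act G (HG : GL2 G) (p : point R) : point R := exist _ _ (act_isPoint HG p).

Lemma act_val G (HG : GL2 G) p v : proj1_sig p = cyc v -> proj1_sig (act HG p) = cyc (v *m G).
Proof. by move=> E; rewrite /= E imgS_cyc. Qed.

Lemma act_invol G (HG : GL2 G) p : G *m G = 1%:M -> act HG (act HG p) = p.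
Proof.
move=> GG; apply: pt_ext => /=; apply: set_ext => w; split.
  by move=> [u [[u' [h ->]] ->]]; rewrite -mulmxA GG mulmx1.
by move=> h; exists (w *m G); split; [exists w|rewrite -mulmxA GG mulmx1].
Qed.

Lemma distant_act G (HG : GL2 G) p q : distant p q -> distant (act HG p) (act HG q).
Proof.
move=> [v [w [hp [hq hvw]]]]; exists (v *m G), (w *m G); split; first exact: act_val.
split; first exact: act_val.
by rewrite -mul_col_mx; apply: GL2_mul.
Qed.

Lemma distant_sym p q : distant p q -> distant q p.
Proof.
move=> [v [w [hp [hq hvw]]]]; exists w, v; do 2 split => //.
have -> : col_mx w v = Sw *m col_mx v w.
  by apply: mx2_eq; rewrite /Sw; mxsimp.
exact: GL2_mul GL2_Sw hvw.
Qed.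

Definition conn := clos_refl_trans (point R) (fun p q : point R => distant p q).
Lemma conn_sym p q : conn p q -> conn q p.
Proof.
elim=> [x y h|x|x y z _ h1 _ h2]; [apply: rt_step; exact: distant_sym|exact: rt_refl|exact: rt_trans h2 h1].
Qed.
Lemma conn_trans p q r : conn p q -> conn q r -> conn p r.
Proof. exact: rt_trans. Qed.
Lemma conn_act G (HG : GL2 G) p q : conn p q -> conn (act HG p) (act HG q).
Proof.
elim=> [x y h|x|x y z _ h1 _ h2]; [apply: rt_step; exact: distant_act|exact: rt_refl|exact: rt_trans h1 h2].
Qed.
Definition e2 : 'rV[R]_2 := rv 0 1.
Lemma rowE i (A : 'M[R]_2) j : (row i A) 0 j = A i j. Proof. by rewrite mxE. Qed.
Lemma scE (a : R) (u : 'rV[R]_2) j : (a *: u) 0 j = a * u 0 j. Proof. by rewrite mxE. Qed.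
Lemma adE (u w : 'rV[R]_2) j : (u + w) 0 j = u 0 j + w 0 j. Proof. by rewrite mxE. Qed.
Lemma adm_e2 : admissible e2.
Proof. by exists Sw; split; [exact: GL2_Sw|apply: rv2_eq; rewrite !rowE /Sw; mxsimp]. Qed.
Definition mkpt v (h : admissible v) : point R := exist _ (cyc v) (ex_intro _ v (conj h erefl)).
Definition P01 := mkpt adm_e2.

Lemma std_conn (K : R -> Prop) : subfield K -> forall q, std_chain K q -> conn q P01.
Proof.
move=> [K1 [n10 [Kcl Kinv]]] q [v [Kk [Kl [vn0 hq]]]].
have [k0|kn0] := eqVneq (v 0 0) 0.
  have ln0 : v 0 1 <> 0.
    by move=> l0; apply: vn0; apply: rv2_eq; rewrite ?k0 ?l0 mxE.
  have [l' [_ [ll' l'l]]] := Kinv _ Kl ln0.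
  have -> : q = P01; last exact: rt_refl.
  apply: pt_ext; rewrite hq /=; apply: set_ext => w; split.
    move=> [r ->]; exists (r * v 0 1); apply: rv2_eq; rewrite !scE /e2; mxsimp.
      by rewrite k0 mulr0.
    by [].
  move=> [r ->]; exists (r * l'); apply: rv2_eq; rewrite !scE /e2; mxsimp.
    by rewrite k0 mulr0.
  by rewrite -mulrA l'l mulr1.
have [k' [_ [kk' k'k]]] := Kinv _ Kk (elimN eqP kn0).
apply: rt_step; exists v, e2; split => //; split => //.
exists (col_mx (rv k' (- (k' * v 0 1))) (rv 0 1)); split; apply: mx2_eq; rewrite /e2; mxsimp => //.
all: by rewrite ?mulrN ?mulrA ?kk' ?k'k ?mul1r ?addNr ?subrr.
Qed.
Lemma imgS_comp G H (S : 'rV[R]_2 -> Prop) :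
  imgS (fun u => u *m G) (imgS (fun u => u *m H) S) = imgS (fun u => u *m (H *m G)) S.
Proof.
apply: set_ext => w; split.
  by move=> [u [[u' [h ->]] ->]]; exists u'; split => //; rewrite mulmxA.
by move=> [u [h ->]]; exists (u *m H); split; [exists u|rewrite mulmxA].
Qed.

Lemma chain_ext (K : R -> Prop) (C D : point R -> Prop) :
  is_chain K C -> (forall p, C p <-> D p) -> is_chain K D.
Proof. move=> [H [hH hC]] e; exists H; split => // p; split => [/e/hC|/hC/e] //. Qed.

Lemma chain_act (K : R -> Prop) G (HG : GL2 G) C : is_chain K C -> is_chain K (img_pt (act HG) C).
Proof.
move=> [H [hH hC]]; exists (H *m G); split; first exact: GL2_mul.
move=> p; split.
  move=> [q' [/hC [q [sq eq']] ->]]; exists q; split => //=.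
  by rewrite eq' imgS_comp.
move=> [q [sq ep]]; exists (act hH q); split.
  by apply/hC; exists q.
by apply: pt_ext; rewrite ep /= imgS_comp.
Qed.

Lemma chain_conn (K : R -> Prop) C : subfield K -> is_chain K C ->
  exists c, forall x, C x -> conn x c.
Proof.
move=> hK [H [hH hC]]; exists (act hH P01) => x /hC [q [sq ex]].
have -> : x = act hH q by apply: pt_ext; rewrite ex.
by apply: conn_act; apply: std_conn sq.
Qed.
Lemma GL2_T (c : R) : GL2 (col_mx (rv 1 c) e2).
Proof.
exists (col_mx (rv 1 (- c)) e2); split; apply: mx2_eq; rewrite /e2; mxsimp => //.
all: by rewrite ?addrN ?addNr.
Qed.
Lemma adm_T (c : R) : admissible (rv 1 c).
Proof. exists (col_mx (rv 1 c) e2); split; first exact: GL2_T.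
by apply: rv2_eq; rewrite !rowE; mxsimp. Qed.
Lemma conn_T (c : R) : conn (mkpt (adm_T c)) P01.
Proof. apply: rt_step; exists (rv 1 c), e2; do 2 split => //; exact: GL2_T. Qed.
End S2.

Theorem mainTheorem6 (R : pzRingType) (K : R -> Prop) :
  subfield K -> disconnected R ->
  exists g : point R -> point R,
    chain_aut K g /\ ~ (exists f, semilinear_bij f /\ induced_by f g).
Proof.
move=> HK [p [q Hpq]].
have [p0 Hp0] : exists p0, ~ conn (P01 R) p0.
  case: (classic (conn (P01 R) p)) => h; last by exists p.
  case: (classic (conn (P01 R) q)) => h'; last by exists q.
  by exfalso; apply: Hpq; apply: conn_trans (conn_sym h) h'.
have [v0 [M [N [hv0 [HMN [HNM HM0]]]]]] : exists (v0 : 'rV[R]_2) (M N : 'M[R]_2), proj1_sig p0 = cyc v0 /\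
   M *m N = 1%:M /\ N *m M = 1%:M /\ row 0 M = v0.
  case: (proj2_sig p0) => v [[M [[N [h1 h2]] h3]] h4].
  by exists v, M, N.
pose G := N *m Sw R *m M.
have GG : G *m G = 1%:M.
  by rewrite /G !mulmxA -(mulmxA _ M N) HMN mulmx1 -(mulmxA N) SwSw mulmx1 HNM.
have HG : GL2 G by exists G.
have e1 : v0 *m N = rv 1 0.
  rewrite -HM0 -row_mul HMN; apply: rv2_eq; by rewrite !mxE.
have v0G : v0 *m G = row 1 M.
  rewrite /G !mulmxA e1; apply: rv2_eq; rewrite /Sw; mxsimp; by rewrite mxE.
have c0 : conn p0 (act HG p0).
  apply: rt_step; exists v0, (v0 *m G); split => //; split; first exact: act_val.
  have -> : col_mx v0 (v0 *m G) = M.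
    by rewrite v0G -HM0; apply: mx2_eq; rewrite ?colmx0 ?colmx1 !rowE.
  by exists N.
pose g := fun x => if excluded_middle_informative (conn p0 x) then act HG x else x.
have gin x : conn p0 x -> g x = act HG x.
  by rewrite /g; case: excluded_middle_informative.
have gout x : ~ conn p0 x -> g x = x.
  by rewrite /g; case: excluded_middle_informative.
have ginv x : g (g x) = x.
  case: (classic (conn p0 x)) => h.
    rewrite (gin _ h) gin ?act_invol //.
    exact: conn_trans c0 (conn_act HG h).
  by rewrite !gout.
have split_chain C : is_chain K C ->
    (forall x, C x -> conn p0 x) \/ (forall x, C x -> ~ conn p0 x).
  move=> hC; have [c hc] := chain_conn HK hC.
  case: (classic (conn p0 c)) => h; [left|right] => x /hc hx.
    exact: conn_trans h (conn_sym hx).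
  by move=> h'; apply: h; apply: conn_trans h' hx.
have cl2 C : is_chain K C -> is_chain K (img_pt g C).
  move=> hC; case: (split_chain C hC) => hs.
    apply: chain_ext (chain_act HG hC) _ => x; split.
      by move=> [y [hy ->]]; exists y; rewrite gin //; apply: hs.
    by move=> [y [hy ->]]; exists y; rewrite gin //; apply: hs.
  apply: chain_ext hC _ => x; split.
    by move=> hx; exists x; rewrite gout //; apply: hs.
  by move=> [y [hy ->]]; rewrite gout //; apply: hs.
exists g; split.
  split; first by exists g.
  split; first exact: cl2.
  move=> D hD; exists (img_pt g D); split; first exact: cl2.
  move=> x; split.
    by move=> hx; exists (g x); split; [exists x|rewrite ginv].
  by move=> [y [[z [hz ->]] ->]]; rewrite ginv.
move=> [f [[_ [fadd [zeta [_ fz]]]] Hind]].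
have Hfix x : conn x (P01 R) -> proj1_sig x = imgS f (proj1_sig x).
  move=> hx; rewrite -Hind gout //.
  by move=> h; apply: Hp0; apply: conn_sym; apply: conn_trans h hx.
have [t Ht] : cyc (e2 R) (f (e2 R)).
  have := Hfix _ (@rt_refl _ _ (P01 R)) => /= E.
  by rewrite E; exists (e2 R); split => //; exists 1; rewrite scale1r.
have Hc c : exists tc, f (rv 1 c) = tc *: rv 1 c.
  have := Hfix _ (conn_T c) => /= E.
  suff : cyc (rv 1 c) (f (rv 1 c)) by move=> [tc ->]; exists tc.
  by rewrite E; exists (rv 1 c); split => //; exists 1; rewrite scale1r.
have [t0 Ht0] := Hc 0.
have key c : t0 * c = zeta c * t.
  have [tc Htc] := Hc c.
  have E : rv 1 c = rv 1 0 + c *: e2 R by apply: rv2_eq; rewrite adE scE /e2; mxsimp.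
  have : f (rv 1 c) = f (rv 1 0) + zeta c *: f (e2 R) by rewrite E fadd fz.
  rewrite Htc Ht0 Ht => E2.
  have E00 := congr1 (fun u : 'rV[R]_2 => u 0 0) E2; have E01 := congr1 (fun u : 'rV[R]_2 => u 0 1) E2.
  move: E00 E01 => /=; rewrite !adE !scE /e2; mxsimp => -> ->.
  by [].
have tt0 : t = t0 by have := key 1; rewrite rmorph1 mulr1 mul1r.
have fv v : f v = t0 *: v.
  have E : v = v 0 0 *: rv 1 0 + v 0 1 *: e2 R by apply: rv2_eq; rewrite adE !scE /e2; mxsimp.
  rewrite {1}E fadd !fz Ht0 Ht -tt0; apply: rv2_eq; rewrite !adE !scE /e2; mxsimp.
    by rewrite -key tt0.
  by rewrite -key tt0.
have : proj1_sig (g p0) (row 1 M).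
  rewrite gin; last exact: rt_refl.
  by rewrite (act_val HG hv0) v0G; exists 1; rewrite scale1r.
rewrite Hind hv0 => -[u [[r ->]]]; rewrite fz fv scalerA -HM0 => Erow.
have E1j j : M 1 j = (zeta r * t0) * M 0 j.
  by rewrite -rowE Erow scE rowE.
case: HK => _ [n10 _]; apply: n10.
have := congr1 (fun A : 'M[R]_2 => A 1 1) HMN; have := congr1 (fun A : 'M[R]_2 => A 0 1) HMN.
rewrite /= !mulmx2E id01 id11 !E1j -!mulrA -!mulrDr => ->.
by rewrite !mulr0.
Qed.
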